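(* Let $E_1,\dots,E_m$ be mutually independent events on a probability space, and for $\mathcal S\subseteq[m]$ let $U(\mathcal S)=\mathbf P\big(\bigcup_{i\in\mathcal S}E_i\big)$. Let $1\le k\le m$ and let $\mathcal S_G=\{f_1,\dots,f_k\}$ be a greedy solution, defined by $\mathcal S_G^0=\emptyset$, $\mathcal S_G^i=\mathcal S_G^{i-1}\cup\{f_i\}$, where $$f_i\in\arg\max_{f\in[m]\setminus\mathcal S_G^{i-1}}\Big(U(\mathcal S_G^{i-1}\cup\{f\})-U(\mathcal S_G^{i-1})\Big),\quad 1\le i\le k,$$ and $\mathcal S_G=\mathcal S_G^k$. Then $\mathcal S_G$ maximizes $U(\mathcal S)$ over all $\mathcal S\subseteq[m]$ with $|\mathcal S|=k$, i.e. $\mathcal S_G$ equals an optimal $k$-element solution. *)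

(* Defs.v *)
From HB Require Import structures.
From mathcomp Require Import all_boot all_order all_algebra.
From mathcomp Require Import all_classical all_reals all_analysis.
Set Implicit Arguments. Unset Strict Implicit. Unset Printing Implicit Defensive.
Import Order.TTheory GRing.Theory Num.Theory.
Local Open Scope classical_set_scope.
Local Open Scope ereal_scope.

Definition union_of {T : Type} {m : nat} (E : 'I_m -> set T) (S : {set 'I_m}) : set T :=
  \big[setU/set0]_(i in S) E i.

Definition inter_of {T : Type} {m : nat} (E : 'I_m -> set T) (J : {set 'I_m}) : set T :=
  \big[setI/setT]_(i in J) E i.

Definition mutually_independent {d : measure_display} {T : measurableType d}
  {R : realType} (P : probability T R) {m : nat} (E : 'I_m -> set T) : Prop :=
  (forall i, measurable (E i)) /\
  forall J : {set 'I_m}, P (inter_of E J) = \big[*%E/1%E]_(i in J) P (E i).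

Definition U {d : measure_display} {T : measurableType d} {R : realType}
  (P : probability T R) {m : nat} (E : 'I_m -> set T) (S : {set 'I_m}) : \bar R :=
  P (union_of E S).

(* S_G^i = {f_1, ..., f_i} (0-based: f indices j < i). *)
Definition greedy_prefix {m k : nat} (f : 'I_k -> 'I_m) (i : nat) : {set 'I_m} :=
  [set x | [exists j : 'I_k, (j < i)%N && (f j == x)]].

Definition is_greedy {d : measure_display} {T : measurableType d} {R : realType}
  (P : probability T R) {m k : nat} (E : 'I_m -> set T) (f : 'I_k -> 'I_m) : Prop :=
  forall i : 'I_k,
    f i \notin greedy_prefix f i /\
    forall g : 'I_m, g \notin greedy_prefix f i ->
      U P E (g |: greedy_prefix f i) - U P E (greedy_prefix f i) <=
      U P E (f i |: greedy_prefix f i) - U P E (greedy_prefix f i).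

(* Main.v *)
Require Import Defs.
From HB Require Import structures.
From mathcomp Require Import all_boot all_order all_algebra.
From mathcomp Require Import all_classical all_reals all_analysis.
From mathcomp Require Import ring lra.
Import Order.TTheory GRing.Theory Num.Theory.
Local Open Scope classical_set_scope.
Local Open Scope ring_scope.

Lemma prod_le_exch (R : realType) (I : finType) (A B : {set I}) (x : I -> R) :
  #|A| = #|B| -> (forall a, a \in A -> 0 <= x a) ->
  (forall a b, a \in A -> b \in B -> x a <= x b) ->
  \prod_(a in A) x a <= \prod_(b in B) x b.
Proof.
move=> hc h0 hab.
have [A0|[a0 Aa0]] := set_0Vmem A.
  move: hc; rewrite A0 cards0 => /esym/eqP; rewrite cards_eq0 => /eqP ->.
  by rewrite !big_set0.
case: (@arg_maxP _ R _ a0 (fun a => a \in A) x Aa0) => a Aa amax.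
have h1 : \prod_(i in A) x i <= \prod_(i in A) x a.
  by apply: ler_prod => i Ai; rewrite h0 //=; exact: amax.
have h2 : \prod_(i in B) x a <= \prod_(i in B) x i.
  by apply: ler_prod => i Bi; rewrite h0 //=; exact: hab.
apply: (le_trans h1); apply: le_trans h2.
by rewrite !prodr_const hc.
Qed.
Definition CI {T : Type} {m : nat} (E : 'I_m -> set T) (K : {set 'I_m}) : set T :=
  \big[setI/setT]_(i in K) ~` E i.

Lemma meas_inter d (T : measurableType d) m (E : 'I_m -> set T) J :
  (forall i, measurable (E i)) -> measurable (inter_of E J).
Proof.
move=> hE; rewrite /inter_of; elim/big_ind: _ => // *; exact: measurableI.
Qed.

Lemma meas_CI d (T : measurableType d) m (E : 'I_m -> set T) J :
  (forall i, measurable (E i)) -> measurable (CI E J).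
Proof.
move=> hE; rewrite /CI; elim/big_ind: _ => //.
  by move=> *; exact: measurableI.
by move=> i _; apply: measurableC.
Qed.

Lemma CI_union T m (E : 'I_m -> set T) K : ~` union_of E K = CI E K.
Proof.
rewrite /CI /union_of; elim/big_rec2: _ => [|i y1 y2 _ <-]; first by rewrite setC0.
by rewrite setCU.
Qed.

Lemma PE d (T : measurableType d) (R : realType) (P : probability T R) A :
  measurable A -> P A = (fine (P A))%:E.
Proof.
move=> mA; rewrite fineK // ge0_fin_numE ?measure_ge0 //.
by apply: (le_lt_trans (probability_le1 P mA)); rewrite ltry.
Qed.

Lemma indep_prod d (T : measurableType d) (R : realType) (P : probability T R) m
  (E : 'I_m -> set T) : mutually_independent P E -> forall J,
  P (inter_of E J) = (\prod_(i in J) fine (P (E i)))%:E.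
Proof.
move=> [hm hp] J; rewrite hp; elim/big_rec2: _ => [//|i y1 y2 _ ->].
by rewrite {1}(@PE _ _ _ P _ (hm i)) EFinM.
Qed.

Lemma indep_mix d (T : measurableType d) (R : realType) (P : probability T R) m
  (E : 'I_m -> set T) : mutually_independent P E -> forall n (K J : {set 'I_m}), #|K| = n ->
  (forall x, x \in J -> x \notin K) ->
  P (inter_of E J `&` CI E K) =
   ((\prod_(i in J) fine (P (E i))) * \prod_(i in K) (1 - fine (P (E i))))%:E.
Proof.
move=> hind; have hm := hind.1.
elim=> [|n IH] K J.
  move/eqP; rewrite cards_eq0 => /eqP -> _.
  by rewrite /CI !big_set0 setIT mulr1; exact: indep_prod.
move=> hK hdis.
have [k Kk] : exists k, k \in K.
  by apply/set0Pn; rewrite -card_gt0 hK.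
set K' := K :\ k.
have hK' : #|K'| = n.
  by move: hK; rewrite (cardsD1 k K) Kk add1n => -[].
have kK' : k \notin K' by rewrite setD11.
have eK : K = k |: K' by rewrite finset.setD1K.
have kJ : k \notin J by apply/negP => /hdis; rewrite Kk.
have dis1 : forall x, x \in J -> x \notin K'.
  by move=> x /hdis; apply: contra; rewrite in_setD1 => /andP[].
have dis2 : forall x, x \in k |: J -> x \notin K'.
  by move=> x; rewrite in_setU1 => /orP[/eqP -> //|/dis1].
set A := inter_of E J `&` CI E K'.
have mA : measurable A by apply: measurableI; [exact: meas_inter|exact: meas_CI].
have e1 : inter_of E J `&` CI E K = A `\` E k.
  by rewrite eK /CI big_setU1 //= setDE -setIA (setIC (~` E k)).
have e2 : A `&` E k = inter_of E (k |: J) `&` CI E K'.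
  by rewrite /inter_of big_setU1 //= setIC setIA.
have hDI : (P A = P (A `\` E k) + P (inter_of E (k |: J) `&` CI E K'))%E.
  by rewrite -e2; exact: measureDI.
rewrite (IH K' (k |: J)) // in hDI; rewrite {1}/A (IH K' J) // in hDI.
have mD : measurable (A `\` E k) by apply: measurableD.
rewrite (@PE _ _ _ P _ mD) in hDI; rewrite e1 (@PE _ _ _ P _ mD).
rewrite -EFinD in hDI; have hD := EFin_inj hDI.
rewrite eK big_setU1 //= -/K'; congr EFin.
rewrite big_setU1 //= in hD.
set y := fine _ in hD *.
set a := \prod_(i in J) _ in hD *.
set b := \prod_(i in K') _ in hD *.
have -> : y = a * b - fine (P (E k)) * a * b by rewrite hD; ring.
ring.
Qed.
Lemma U_formula d (T : measurableType d) (R : realType) (P : probability T R) m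
  (E : 'I_m -> set T) : mutually_independent P E -> forall S,
  U P E S = (1 - \prod_(i in S) (1 - fine (P (E i))))%:E.
Proof.
move=> hind S; have hm := hind.1.
rewrite /U -(setCK (union_of E S)) CI_union probability_setC; last exact: meas_CI.
have h0 : forall x, x \in (finset.set0 : {set 'I_m}) -> x \notin S by move=> x; rewrite inE.
have := @indep_mix _ _ _ P _ _ hind _ S finset.set0 erefl h0.
rewrite /inter_of big_set0 setTI big_set0 mul1r => ->.
by rewrite EFinB.
Qed.

Lemma prefix_sub m k (f : 'I_k -> 'I_m) (i : nat) :
  greedy_prefix f i \subset greedy_prefix f k.
Proof.
apply/fintype.subsetP => x; rewrite !inE => /existsP[j /andP[_ hj]].
by apply/existsP; exists j; rewrite hj ltn_ord.
Qed.

Arguments prefix_sub {m k}.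

Lemma prefixS m k (f : 'I_k -> 'I_m) (i j : 'I_k) :
  (j < i)%N -> f j \in greedy_prefix f i.
Proof. by move=> hji; rewrite inE; apply/existsP; exists j; rewrite hji eqxx. Qed.

Local Open Scope ereal_scope.

Theorem lemma2 (d : measure_display) (T : measurableType d) (R : realType)
  (P : probability T R) (m k : nat) (E : 'I_m -> set T)
  (hk1 : (1 <= k)%N) (hkm : (k <= m)%N)
  (hind : mutually_independent P E)
  (f : 'I_k -> 'I_m) (hgreedy : is_greedy P E f) :
  #|greedy_prefix f k| = k /\
  forall S : {set 'I_m}, #|S| = k -> U P E S <= U P E (greedy_prefix f k).
Proof.
have finj : injective f.
  move=> i j eij; apply/eqP; case: (ltngtP i j) => [hij|hji|/val_inj -> //].
  - by have := (hgreedy j).1; rewrite -eij prefixS.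
  - by have := (hgreedy i).1; rewrite eij prefixS.
have eG : greedy_prefix f k = f @: (finset.setT : {set 'I_k}).
  apply/setP => x; rewrite inE; apply/existsP/imsetP => [[j /andP[_ /eqP <-]]|[j _ ->]].
    by exists j => //; rewrite inE.
  by exists j; rewrite ltn_ord eqxx.
have hGk : #|greedy_prefix f k| = k by rewrite eG card_imset // cardsT card_ord.
split; first exact: hGk.
set G := greedy_prefix f k.
set q := fun i => fine (P (E i)).
have hm := hind.1.
have hq0 : forall i, (0 <= q i)%R by move=> i; apply: fine_ge0; apply: measure_ge0.
have hq1 : forall i, (q i <= 1)%R.
  move=> i; rewrite -lee_fin /q -PE //; exact: probability_le1.
have hx0 : forall i, (0 <= 1 - q i)%R by move=> i; rewrite subr_ge0.
have hx1 : forall i, (1 - q i <= 1)%R by move=> i; rewrite lerBlDr lerDl.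
have hV0 : forall S : {set 'I_m}, (0 <= \prod_(i in S) (1 - q i))%R.
  by move=> S; apply: prodr_ge0 => i _.
have hgr : forall (i : 'I_k) g, g \notin greedy_prefix f i ->
    ((1 - q (f i)) * \prod_(j in greedy_prefix f i) (1 - q j) <=
     (1 - q g) * \prod_(j in greedy_prefix f i) (1 - q j))%R.
  move=> i g hg; have := (hgreedy i).2 g hg.
  rewrite !U_formula // -!EFinB lee_fin !big_setU1 //= ?(hgreedy i).1 //.
  by rewrite /q /=; move=> H; lra.
move=> S hS; rewrite !U_formula // lee_fin lerD2l lerN2.
have [V0|VG0] := eqVneq (\prod_(i in G) (1 - q i))%R 0%R.
  by rewrite V0.
have hP : forall i : 'I_k, (0 < \prod_(j in greedy_prefix f i) (1 - q j))%R.
  move=> i; rewrite lt_def hV0 andbT; apply: contraNneq VG0 => V0.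
  rewrite (big_setID (greedy_prefix f i)) /=.
  by rewrite (finset.setIidPr (prefix_sub f i)) V0 mul0r.
have hq : forall g, g \notin G -> forall j : 'I_k, (1 - q (f j) <= 1 - q g)%R.
  move=> g gG j.
  have gj : g \notin greedy_prefix f j.
    by apply: contra gG; apply/fintype.subsetP; exact: prefix_sub.
  by have := hgr j g gj; rewrite ler_pM2r.
rewrite (big_setID S) /= (big_setID (A:=S) G) /= finset.setIC.
apply: ler_wpM2l; first exact: hV0.
apply: prod_le_exch.
- have := cardsID S G; have := cardsID G S.
  move=> h1 h2; apply/eqP; rewrite -(eqn_add2l #|S :&: G|); apply/eqP.
  by rewrite {1}(finset.setIC S G) h1 h2 hS hGk.
- by move=> a _; exact: hx0.
- move=> a b; rewrite !inE => /andP[_ aG] /andP[bG _].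
  move: aG => /existsP[j /andP[_ /eqP <-]]; apply: (hq b _ j); by rewrite /G inE.
Qed.
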